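(* Let $a \in \mathbb{C}$ and $w \in \mathbb{C}\setminus\{0\}$. For $\tau > 0$ small enough that $0 < \tau |w| e^{\tau|a|} < 1/e$, define $$\Sigma_0^+(\tau) := \tfrac{1}{\tau}W_0\big(\tau|w|e^{-\tau|a|}\big) + |a|,\quad \Sigma_0^-(\tau) := \tfrac{1}{\tau}W_0\big(-\tau|w|e^{\tau|a|}\big) - |a|,\quad \Sigma_{-1}(\tau) := \tfrac{1}{\tau}W_{-1}\big(-\tau|w|e^{\tau|a|}\big) - |a|.$$ Then for every sufficiently small $\tau > 0$, every root $z$ of $z + a - we^{-\tau z} = 0$ satisfies $$\operatorname{Re}(z) \le \Sigma_{-1}(\tau) \quad\text{or}\quad \Sigma_0^-(\tau) \le \operatorname{Re}(z) \le \Sigma_0^+(\tau),$$ and moreover $\lim_{\tau\downarrow 0}\Sigma_0^\pm(\tau) = \pm(|a|+|w|)$ and $\lim_{\tau\downarrow 0}\Sigma_{-1}(\tau) = -\infty$.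
   Context: $W_0 : [-1/e,\infty) \to [-1,\infty)$ is the inverse of the increasing function $x \mapsto xe^x$ on $[-1,\infty)$, and $W_{-1} : [-1/e, 0) \to (-\infty,-1]$ is the inverse of the decreasing function $x\mapsto xe^x$ on $(-\infty,-1]$ (the two real branches of the Lambert $W$ function). *)

(* Defs.v *)
From Stdlib Require Import Reals ClassicalEpsilon.
From Coquelicot Require Import Coquelicot.
Open Scope R_scope.

Definition cexp (z : C) : C :=
  (exp (Re z) * cos (Im z), exp (Re z) * sin (Im z)).

(* Principal branch W_0 : [-1/e, oo) -> [-1, oo): inverse of x e^x on [-1,oo). *)
Definition W0 (x : R) : R :=
  epsilon (inhabits 0) (fun y => -1 <= y /\ y * exp y = x).

(* Lower branch W_{-1} : [-1/e, 0) -> (-oo, -1]: inverse of x e^x on (-oo,-1]. *)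
Definition Wm1 (x : R) : R :=
  epsilon (inhabits 0) (fun y => y <= -1 /\ y * exp y = x).

Definition Sigma0p (a w : C) (tau : R) : R :=
  / tau * W0 (tau * Cmod w * exp (- tau * Cmod a)) + Cmod a.
Definition Sigma0m (a w : C) (tau : R) : R :=
  / tau * W0 (- tau * Cmod w * exp (tau * Cmod a)) - Cmod a.
Definition Sigmam1 (a w : C) (tau : R) : R :=
  / tau * Wm1 (- tau * Cmod w * exp (tau * Cmod a)) - Cmod a.

(* Main.v *)
Require Import Defs.
From Stdlib Require Import Reals Lra ClassicalEpsilon.
From Coquelicot Require Import Coquelicot.
Open Scope R_scope.

Lemma exp_le' x y : x <= y -> exp x <= exp y.
Proof. intros [H|H]; [left; apply exp_increasing; auto| subst; lra]. Qed.

Lemma f_incr a b : -1 <= a -> a < b -> a * exp a < b * exp b.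
Proof.
  intros Ha Hab. set (d := b - a).
  assert (Hd : 0 < d) by (unfold d; lra).
  assert (Hb : b = a + d) by (unfold d; lra).
  rewrite Hb, exp_plus.
  assert (E1 := exp_ineq1 d ltac:(lra)).
  assert (E2 := exp_ineq1 (-d) ltac:(lra)).
  assert (E3 : exp (-d) * exp d = 1) by (rewrite <- exp_plus; replace (-d+d) with 0 by ring; apply exp_0).
  assert (Ea := exp_pos a). assert (Ed := exp_pos d).
  assert (K : 0 < (a + d) * exp d - a).
  { assert (0 < 1 + (d - 1) * exp d) by nra. nra. }
  nra.
Qed.

Lemma f_decr a b : a < b -> b <= -1 -> b * exp b < a * exp a.
Proof.
  intros Hab Hb1. set (d := b - a).
  assert (Hd : 0 < d) by (unfold d; lra).
  assert (Hb : b = a + d) by (unfold d; lra).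
  rewrite Hb, exp_plus.
  assert (E1 := exp_ineq1 d ltac:(lra)).
  assert (Ea := exp_pos a). assert (Ed := exp_pos d).
  assert (K : (a + d) * exp d - a < 0) by nra.
  nra.
Qed.

Lemma expm1 : exp (-1) = / exp 1.
Proof. apply exp_Ropp. Qed.

Lemma W0_spec x : - / exp 1 <= x -> -1 <= W0 x /\ W0 x * exp (W0 x) = x.
Proof.
  intros Hx. unfold W0. apply epsilon_spec.
  assert (C : continuity (fun y => y * exp y - x)) by reg.
  assert (H1 : -1 <= Rabs x) by (pose proof (Rabs_pos x); lra).
  destruct (IVT_cor _ _ _ C H1) as [y [Hy Hy']].
  - assert (exp 0 <= exp (Rabs x)) by (apply exp_le'; apply Rabs_pos).
    rewrite exp_0 in H. cbv beta. rewrite expm1.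
    assert (x <= Rabs x) by apply Rle_abs.
    assert (0 <= Rabs x * exp (Rabs x) - x) by (pose proof (Rabs_pos x); nra).
    assert (-1 * / exp 1 - x <= 0) by lra. nra.
  - exists y. split; lra.
Qed.

Lemma Wm1_spec x : - / exp 1 <= x -> x < 0 -> Wm1 x <= -1 /\ Wm1 x * exp (Wm1 x) = x.
Proof.
  intros Hx Hx0. unfold Wm1. apply epsilon_spec.
  assert (C : continuity (fun y => y * exp y - x)) by reg.
  set (t := Rmax 1 (4 / (- x))).
  assert (Ht1 : 1 <= t) by apply Rmax_l.
  assert (Ht2 : 4 / (-x) <= t) by apply Rmax_r.
  assert (H1 : -t <= -1) by lra.
  destruct (IVT_cor _ _ _ C H1) as [y [Hy Hy']].
  - assert (Et : exp t = exp (t/2) * exp (t/2)) by (rewrite <- exp_plus; f_equal; field).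
    assert (E2 := exp_ineq1_le (t/2)).
    assert (Et2 : t * t / 4 <= exp t) by nra.
    assert (Em : exp (-t) * exp t = 1) by (rewrite <- exp_plus; replace (-t+t) with 0 by ring; apply exp_0).
    assert (Ep := exp_pos t). assert (Epm := exp_pos (-t)).
    assert (K : t * exp (-t) <= 4 / t).
    { apply Rmult_le_reg_r with (exp t); auto.
      rewrite Rmult_assoc, Em. unfold Rdiv. 
      apply Rmult_le_reg_l with t; [lra|].
      replace (t * (4 * / t * exp t)) with (4 * exp t) by (field; lra). nra. }
    assert (K2 : 4 / t <= - x).
    { apply Rmult_le_reg_l with t; [lra|]. unfold Rdiv in *.
      replace (t * (4 * / t)) with 4 by (field; lra).
      apply Rmult_le_reg_l with (/ - x). apply Rinv_0_lt_compat; lra.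
      replace (/ - x * (t * - x)) with t by (field; lra). lra. }
    cbv beta. rewrite expm1.
    assert (0 <= - t * exp (-t) - x) by lra.
    assert (-1 * / exp 1 - x <= 0) by lra. nra.
  - exists y. split; lra.
Qed.

Lemma Cmod_cexp u : Cmod (cexp u) = exp (Re u).
Proof.
  unfold Cmod, cexp; cbn [fst snd].
  replace ((exp (Re u) * cos (Im u)) ^ 2 + (exp (Re u) * sin (Im u)) ^ 2)
    with (exp (Re u) ^ 2).
  - apply sqrt_pow2. left; apply exp_pos.
  - pose proof (sin2_cos2 (Im u)). unfold Rsqr in H. nra.
Qed.

Lemma root_bound (a w z : C) (tau : R) :
  (z + a - w * cexp (- (RtoC tau * z)))%C = 0%C ->
  Rabs (Re z + Re a) <= Cmod w * exp (- (tau * Re z)).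
Proof.
  intros H.
  assert (E : (z + a)%C = (w * cexp (- (RtoC tau * z)))%C).
  { destruct z as [z1 z2], a as [a1 a2], w as [w1 w2].
    unfold cexp in *. simpl in *. injection H; intros. apply injective_projections; simpl; lra. }
  assert (R1 : Re (z + a) = Re z + Re a) by reflexivity.
  rewrite <- R1. eapply Rle_trans. apply re_le_Cmod.
  rewrite E, Cmod_mult, Cmod_cexp. right. f_equal. f_equal.
  destruct z; simpl; ring.
Qed.

Lemma L1 t X A W : 0 < t -> t * (X + A) <= W -> X <= / t * W - A.
Proof. intros Ht H. replace X with (/ t * (t * (X + A)) - A) by (field; lra).
  apply Rplus_le_compat_r. apply Rmult_le_compat_l; [left; apply Rinv_0_lt_compat; lra| lra]. Qed.
Lemma L2 t X A W : 0 < t -> W <= t * (X + A) -> / t * W - A <= X.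
Proof. intros Ht H. replace X with (/ t * (t * (X + A)) - A) by (field; lra).
  apply Rplus_le_compat_r. apply Rmult_le_compat_l; [left; apply Rinv_0_lt_compat; lra| lra]. Qed.

Lemma upper (t X A B ra : R) : 0 < t -> 0 < B -> Rabs ra <= A ->
  Rabs (X + ra) <= B * exp (- (t * X)) ->
  X <= / t * W0 (t * B * exp (- t * A)) + A.
Proof.
  intros Ht HB Ha H.
  set (s := t * B * exp (- t * A)).
  assert (Hs : 0 < s) by (unfold s; pose proof (exp_pos (-t*A)); pose proof (Rmult_lt_0_compat _ _ Ht HB); nra).
  assert (Ee : 0 < exp 1) by apply exp_pos.
  destruct (W0_spec s) as [W1 W2].
  { assert (0 < / exp 1) by (apply Rinv_0_lt_compat; lra). lra. }
  set (W := W0 s) in *.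
  destruct (Rle_or_lt X (/ t * W + A)) as [|HX]; auto. exfalso.
  assert (Hu : W < t * (X - A)).
  { replace W with (t * (/ t * W)) by (field; lra).
    apply Rmult_lt_compat_l; lra. }
  pose proof (f_incr _ _ W1 Hu) as F.
  assert (G : X - A <= B * exp (- (t * X))).
  { pose proof (Rle_abs (X + ra)). pose proof (Rabs_le_between ra) . pose proof (Rle_abs (-ra)). rewrite Rabs_Ropp in H2. lra. }
  assert (Ex : exp (t * (X - A)) = exp (t * X) * exp (- t * A)) by (rewrite <- exp_plus; f_equal; ring).
  assert (Em : exp (- (t * X)) * exp (t * X) = 1) by (rewrite <- exp_plus; replace (- (t * X) + t * X) with 0 by ring; apply exp_0).
  assert (P1 := exp_pos (t * X)). assert (P2 := exp_pos (- t * A)).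
  assert (G2 : (X - A) * exp (t * X) <= B).
  { replace B with (B * exp (- (t * X)) * exp (t * X)) by (rewrite Rmult_assoc, Em; ring).
    apply Rmult_le_compat_r; lra. }
  rewrite Ex, W2 in F. unfold s in F.
  assert (t * (X - A) * (exp (t * X) * exp (- t * A)) = t * ((X - A) * exp (t * X)) * exp (- t * A)) by ring.
  rewrite H0 in F.
  assert (t * ((X - A) * exp (t * X)) <= t * B) by (apply Rmult_le_compat_l; lra).
  nra.
Qed.

Lemma lower (t X A B ra : R) : 0 < t -> 0 < B -> Rabs ra <= A ->
  Rabs (X + ra) <= B * exp (- (t * X)) ->
  - / exp 1 <= - t * B * exp (t * A) ->
  X <= / t * Wm1 (- t * B * exp (t * A)) - A \/
  / t * W0 (- t * B * exp (t * A)) - A <= X.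
Proof.
  intros Ht HB Ha H Hc.
  set (c := - t * B * exp (t * A)) in *.
  assert (Hc0 : c < 0) by (unfold c; pose proof (exp_pos (t*A)); pose proof (Rmult_lt_0_compat _ _ Ht HB); nra).
  destruct (W0_spec c Hc) as [W1 W2].
  destruct (Wm1_spec c Hc Hc0) as [V1 V2].
  set (v := t * (X + A)).
  assert (G : - (X + A) <= B * exp (- (t * X))).
  { pose proof (Rle_abs (-(X + ra))). rewrite Rabs_Ropp in H0. pose proof (Rle_abs ra). lra. }
  assert (Ex : exp v = exp (t * X) * exp (t * A)) by (rewrite <- exp_plus; f_equal; unfold v; ring).
  assert (Em : exp (- (t * X)) * exp (t * X) = 1) by (rewrite <- exp_plus; replace (- (t * X) + t * X) with 0 by ring; apply exp_0).
  assert (P1 := exp_pos (t * X)). assert (P2 := exp_pos (t * A)).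
  assert (G2 : - (X + A) * exp (t * X) <= B).
  { replace B with (B * exp (- (t * X)) * exp (t * X)) by (rewrite Rmult_assoc, Em; ring).
    apply Rmult_le_compat_r; lra. }
  assert (Fv : c <= v * exp v).
  { rewrite Ex. unfold c, v.
    replace (t * (X + A) * (exp (t * X) * exp (t * A))) with (- (t * (- (X + A) * exp (t * X)) * exp (t * A))) by ring.
    assert (t * (- (X + A) * exp (t * X)) <= t * B) by (apply Rmult_le_compat_l; lra).
    nra. }
  destruct (Rle_or_lt v (Wm1 c)) as [Hv|Hv].
  { left. apply L1; auto. }
  destruct (Rle_or_lt (W0 c) v) as [Hv2|Hv2].
  { right. apply L2; auto. }
  exfalso. destruct (Rle_or_lt v (-1)) as [Hv3|Hv3].
  - pose proof (f_decr _ _ Hv Hv3). lra.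
  - pose proof (f_incr v (W0 c) ltac:(lra) Hv2). lra.
Qed.

Lemma ball_R (x y e : R) : ball x e y <-> Rabs (y - x) < e.
Proof. reflexivity. Qed.

Lemma at_right_pos : at_right 0 (fun t => 0 < t).
Proof. unfold at_right, within. apply filter_forall. auto. Qed.

Lemma W0_bound x : - / exp 1 <= x -> Rabs (W0 x) <= exp 1 * Rabs x.
Proof.
  intros Hx. destruct (W0_spec x Hx) as [W1 W2].
  set (y := W0 x) in *. rewrite <- W2.
  assert (Ee := exp_pos y). rewrite Rabs_mult, (Rabs_right (exp y)) by lra.
  destruct (Rle_or_lt 0 y) as [Hy|Hy].
  - rewrite Rabs_right by lra.
    assert (1 <= exp y) by (pose proof (exp_ineq1_le y); lra).
    assert (1 < exp 1) by (pose proof (exp_ineq1 1 ltac:(lra)); lra).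
    assert (0 <= y * exp y - y) by nra. nra.
  - rewrite Rabs_left by lra.
    assert (exp (-1) <= exp y) by (apply exp_le'; lra).
    rewrite expm1 in H.
    assert (Ep := exp_pos 1).
    assert (exp 1 * exp y >= 1).
    { replace 1 with (exp 1 * / exp 1) at 2 by (field; lra). nra. }
    nra.
Qed.

Lemma W0_lim (q : R -> R) (q0 : R) :
  filterlim q (at_right 0) (locally q0) ->
  filterlim (fun t => / t * W0 (t * q t)) (at_right 0) (locally q0).
Proof.
  intros Hq.
  assert (Hid : filterlim (fun t : R => t) (at_right 0) (locally 0)).
  { intros P HP. unfold filtermap, at_right, within. apply filter_imp with (2 := HP). auto. }
  assert (Hp : filterlim (fun t => t * q t) (at_right 0) (locally 0)).
  { replace 0 with (0 * q0) at 2 by ring.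
    apply (filterlim_comp_2 (fun t : R => t) q Rmult Hid Hq).
    apply (filterlim_mult (K := R_AbsRing) 0 q0). }
  assert (Ee : 0 < exp 1) by apply exp_pos.
  assert (Hev : at_right 0 (fun t => - / exp 1 <= t * q t)).
  { pose proof (proj1 (filterlim_locally _ _) Hp (mkposreal _ (Rinv_0_lt_compat _ Ee))) as K.
    apply filter_imp with (2 := K). intros t Ht. rewrite ball_R in Ht. simpl in Ht.
    rewrite Rminus_0_r in Ht. apply Rabs_def2 in Ht. lra. }
  assert (HW : filterlim (fun t => W0 (t * q t)) (at_right 0) (locally 0)).
  { apply filterlim_locally. intros eps.
    assert (He : 0 < eps / exp 1) by (apply Rdiv_lt_0_compat; [apply cond_pos|lra]).
    pose proof (proj1 (filterlim_locally _ _) Hp (mkposreal _ He)) as K.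
    apply filter_imp with (2 := filter_and _ _ K Hev). intros t [Ht Ht2].
    rewrite ball_R in *. simpl in Ht. rewrite Rminus_0_r in *.
    pose proof (W0_bound _ Ht2).
    apply Rle_lt_trans with (1 := H).
    replace (pos eps) with (exp 1 * (eps / exp 1)) by (field; lra).
    apply Rmult_lt_compat_l; lra. }
  assert (Hexp : filterlim (fun t => exp (- W0 (t * q t))) (at_right 0) (locally 1)).
  { rewrite <- exp_0. replace 0 with (- 0) at 2 by ring.
    apply (filterlim_comp _ _ _ (fun t => W0 (t * q t)) (fun x => exp (- x)) _ (locally 0)); auto.
    apply (continuous_exp_comp (fun x => - x)). apply (continuous_opp (fun x : R => x)). apply continuous_id. }
  assert (Hprod : filterlim (fun t => q t * exp (- W0 (t * q t))) (at_right 0) (locally q0)).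
  { assert (M := filterlim_mult (K:=R_AbsRing) q0 1). change (mult q0 1) with (q0*1) in M.
    rewrite Rmult_1_r in M. exact (filterlim_comp_2 q _ Rmult Hq Hexp M). }
  apply filterlim_ext_loc with (2 := Hprod).
  apply filter_imp with (2 := filter_and _ _ Hev at_right_pos).
  intros t [H1 H2]. destruct (W0_spec _ H1) as [_ W2].
  set (y := W0 (t * q t)) in *.
  assert (Ey : exp (- y) * exp y = 1) by (rewrite <- exp_plus; replace (- y + y) with 0 by ring; apply exp_0).
  assert (Hy : y = t * q t * exp (- y)) by (rewrite <- W2, Rmult_assoc, (Rmult_comm (exp y)), Ey; ring).
  transitivity (/ t * (t * q t * exp (- y))); [field; lra | now rewrite <- Hy].
Qed.

Lemma lim_cont (f : R -> R) : continuity_pt f 0 -> filterlim f (at_right 0) (locally (f 0)).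
Proof.
  intros H. apply continuity_pt_filterlim in H.
  intros P HP. apply H in HP. unfold filtermap, at_right, within in *.
  apply filter_imp with (2 := HP). auto.
Qed.

Theorem mainTheorem3 (a w : C) (hw : w <> 0%C) :
  (exists tau0 : R, 0 < tau0 /\
     forall tau : R, 0 < tau < tau0 ->
       0 < tau * Cmod w * exp (tau * Cmod a) < / exp 1 /\
       forall z : C, (z + a - w * cexp (- (RtoC tau * z)))%C = 0%C ->
         Re z <= Sigmam1 a w tau \/
         (Sigma0m a w tau <= Re z /\ Re z <= Sigma0p a w tau)) /\
  filterlim (Sigma0p a w) (at_right 0) (locally (Cmod a + Cmod w)) /\
  filterlim (Sigma0m a w) (at_right 0) (locally (- (Cmod a + Cmod w))) /\
  filterlim (Sigmam1 a w) (at_right 0) (Rbar_locally m_infty).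
Proof.
  set (A := Cmod a). set (B := Cmod w).
  assert (HA : 0 <= A) by apply Cmod_ge_0.
  assert (HB : 0 < B) by (apply Cmod_gt_0; exact hw).
  assert (Ee : 0 < exp 1) by apply exp_pos.
  assert (HK : 0 < B * exp A) by (apply Rmult_lt_0_compat; auto; apply exp_pos).
  set (tau0 := Rmin 1 (/ (exp 1 * (B * exp A)))).
  assert (Ht0 : 0 < tau0).
  { unfold tau0. apply Rmin_pos; [lra|]. apply Rinv_0_lt_compat, Rmult_lt_0_compat; auto. }
  assert (Part1c : forall tau, 0 < tau < tau0 ->
            0 < tau * B * exp (tau * A) < / exp 1).
  { intros tau [H1 H2].
    assert (H3 : tau < 1) by (pose proof (Rmin_l 1 (/ (exp 1 * (B * exp A)))); unfold tau0 in H2; lra).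
    assert (H4 : tau < / (exp 1 * (B * exp A))) by (pose proof (Rmin_r 1 (/ (exp 1 * (B * exp A)))); unfold tau0 in H2; lra).
    assert (H5 : exp (tau * A) <= exp A) by (apply exp_le'; nra).
    assert (H6 := exp_pos (tau * A)).
    split.
    - apply Rmult_lt_0_compat; auto. apply Rmult_lt_0_compat; auto.
    - assert (tau * B * exp (tau * A) <= tau * (B * exp A)).
      { rewrite Rmult_assoc. apply Rmult_le_compat_l; [lra|]. apply Rmult_le_compat_l; lra. }
      assert (tau * (B * exp A) < / (exp 1 * (B * exp A)) * (B * exp A)) by (apply Rmult_lt_compat_r; auto).
      replace (/ (exp 1 * (B * exp A)) * (B * exp A)) with (/ exp 1) in H0 by (field; lra).
      lra. }
  split; [|split; [|split]].
  - exists tau0. split; auto. intros tau Htau. split; [apply Part1c; auto|].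
    intros z Hz. pose proof (root_bound a w z tau Hz) as Hr.
    assert (Ha : Rabs (Re a) <= A) by apply re_le_Cmod.
    destruct (Part1c tau Htau) as [_ Hc].
    assert (Hc' : - / exp 1 <= - tau * B * exp (tau * A)) by lra.
    destruct (lower tau (Re z) A B (Re a) ltac:(lra) HB Ha Hr Hc') as [L|L].
    + left. exact L.
    + right. split; [exact L|]. apply (upper tau (Re z) A B (Re a)); auto. lra.
  - assert (Hq : filterlim (fun t => B * exp (- t * A)) (at_right 0) (locally B)).
    { pose proof (lim_cont (fun t => B * exp (- t * A))) as K. simpl in K.
      replace (B * exp (- 0 * A)) with B in K by (replace (-0*A) with 0 by ring; rewrite exp_0; ring).
      apply K. reg. }
    pose proof (W0_lim _ _ Hq) as HW.
    assert (HW' : filterlim (fun t => / t * W0 (t * B * exp (- t * A))) (at_right 0) (locally B)).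
    { apply filterlim_ext with (2 := HW). intros t. now rewrite Rmult_assoc. }
    assert (M := filterlim_plus (K := R_AbsRing) (V := R_NormedModule) B A).
    change (plus B A) with (B + A) in M. rewrite Rplus_comm in M.
    exact (filterlim_comp_2 _ _ Rplus HW' (filterlim_const A) M).
  - assert (Hq : filterlim (fun t => - B * exp (t * A)) (at_right 0) (locally (- B))).
    { pose proof (lim_cont (fun t => - B * exp (t * A))) as K. simpl in K.
      replace (- B * exp (0 * A)) with (- B) in K by (replace (0*A) with 0 by ring; rewrite exp_0; ring).
      apply K. reg. }
    pose proof (W0_lim _ _ Hq) as HW.
    assert (HW' : filterlim (fun t => / t * W0 (- t * B * exp (t * A))) (at_right 0) (locally (- B))).
    { apply filterlim_ext with (2 := HW). intros t. do 2 f_equal. ring. }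
    assert (M := filterlim_plus (K := R_AbsRing) (V := R_NormedModule) (- B) (- A)).
    change (plus (- B) (- A)) with (- B + - A) in M.
    replace (- B + - A) with (- (A + B)) in M by ring.
    apply (filterlim_ext (fun t => (/ t * W0 (- t * B * exp (t * A))) + - A)).
    { intros t. unfold Sigma0m. fold A B. ring. }
    exact (filterlim_comp_2 _ _ Rplus HW' (filterlim_const (- A)) M).
  - intros P [N HN]. unfold filtermap.
    set (d := Rmin tau0 (/ (Rabs N + A + 1))).
    assert (Hd : 0 < d).
    { unfold d. apply Rmin_pos; auto. apply Rinv_0_lt_compat. pose proof (Rabs_pos N). lra. }
    exists (mkposreal d Hd). intros t Ht Htp. rewrite ball_R in Ht. simpl in Ht.
    rewrite Rminus_0_r, Rabs_right in Ht by lra.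
    apply HN. unfold Sigmam1. fold A B.
    assert (Ht0' : t < tau0) by (pose proof (Rmin_l tau0 (/ (Rabs N + A + 1))); unfold d in Ht; lra).
    assert (Ht1 : t < / (Rabs N + A + 1)) by (pose proof (Rmin_r tau0 (/ (Rabs N + A + 1))); unfold d in Ht; lra).
    destruct (Part1c t (conj Htp Ht0')) as [C1 C2].
    destruct (Wm1_spec (- t * B * exp (t * A))) as [V1 _]; [lra|lra|].
    assert (Hi : Rabs N + A + 1 < / t).
    { replace (Rabs N + A + 1) with (/ / (Rabs N + A + 1)) by (field; pose proof (Rabs_pos N); lra).
      apply Rinv_lt_contravar; auto. apply Rmult_lt_0_compat; auto. apply Rinv_0_lt_compat. pose proof (Rabs_pos N); lra. }
    assert (/ t * Wm1 (- t * B * exp (t * A)) <= / t * -1).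
    { apply Rmult_le_compat_l; auto. left; apply Rinv_0_lt_compat; auto. }
    pose proof (Rle_abs (-N)). rewrite Rabs_Ropp in H0. lra.
Qed.
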